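(* Let $\lambda>0$, $\eta\in(0,1)$, $g_l^*>0$ and let $t\ge 1$ be an integer. For a finite instance set $I$ with real gradients $g_i$, let $V(I)=-\frac{\sum_{i\in I}g_i}{|I|+\lambda}$ and define the clipped leaf value $$V_t(I)=V(I)\cdot\min\left(1,\frac{g_l^*(1-\eta)^{t-1}}{|V(I)|}\right)$$ (with $V_t(I)=0$ if $V(I)=0$). Let $\Delta V_t$ be the supremum of $|V_t(I\cup\{s\})-V_t(I)|$ over all finite instance sets $I$ and instances $s\notin I$ such that all gradients involved satisfy $|g_i|\le g_l^*$. Then $$\Delta V_t\le \min\left(\frac{g_l^*}{1+\lambda},\,2g_l^*(1-\eta)^{t-1}\right).$$
   Context: This is the sensitivity of leaf values in the tree of the $t$-th boosting iteration when gradient-based data filtering (discarding instances with $|g_i|>g_l^*$, where $g_l^*=\max_{y_p\in[-1,1]}|\partial l(y_p,y)/\partial y|_{y=0}|$ for the loss $l$) and geometric leaf clipping (clipping leaf values in magnitude to $g_l^*(1-\eta)^{t-1}$, $\eta$ the shrinkage rate) are applied. *)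

(* Defs.v *)
From mathcomp Require Import all_boot all_order all_algebra.
Set Implicit Arguments. Unset Strict Implicit. Unset Printing Implicit Defensive.
Import Order.TTheory GRing.Theory Num.Theory.
Local Open Scope ring_scope.

(* Unclipped leaf value  V(I) = - (sum_{i in I} g_i) / (|I| + lambda),
   for a finite instance set I given as a duplicate-free list of instances. *)
Definition leafV (R : realFieldType) (T : eqType) (lam : R) (g : T -> R)
  (I : seq T) : R :=
  - (\sum_(i <- I) g i) / ((size I)%:R + lam).

Definition clipV (R : realFieldType) (c v : R) : R :=
  if v == 0 then 0 else v * Num.min 1 (c / `|v|).

Definition leafVt (R : realFieldType) (T : eqType) (lam eta gl : R) (t : nat)
  (g : T -> R) (I : seq T) : R :=
  clipV (gl * (1 - eta) ^+ t.-1) (leafV lam g I).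

(* Main.v *)
Require Import Defs.
From mathcomp Require Import all_boot all_order all_algebra.
From mathcomp Require Import ring lra.
Import Order.TTheory GRing.Theory Num.Theory.
Local Open Scope ring_scope.

Lemma clipE (R : realFieldType) (c v : R) : 0 < c ->
  clipV c v = if `|v| <= c then v else if 0 <= v then c else - c.
Proof.
move=> hc; rewrite /clipV.
have [->|v0] := eqVneq v 0; first by rewrite normr0 ltW.
have nv : 0 < `|v| by rewrite normr_gt0.
case: ifP => hv.
  have : 1 <= c / `|v| by rewrite ler_pdivlMr // mul1r.
  by move=> h; rewrite (min_idPl h) mulr1.
have h : c / `|v| <= 1.
  rewrite ler_pdivrMr // mul1r; apply/ltW; rewrite ltNge hv //.
rewrite (min_idPr h).
case: (lerP 0 v) => hv0.
  by rewrite ger0_norm // mulrCA mulfV // mulr1.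
by rewrite ltr0_norm // invrN !mulrN mulrCA mulfV // mulr1.
Qed.

Lemma clip_bound (R : realFieldType) (v c : R) : 0 < c -> `|clipV c v| <= c.
Proof.
move=> hc; rewrite clipE //; case: ifP => // _.
by case: ifP => _; rewrite ?normrN gtr0_norm.
Qed.

Lemma clip_lip (R : realFieldType) (c a b : R) : 0 < c ->
  `|clipV c a - clipV c b| <= `|a - b|.
Proof.
move=> hc; rewrite !clipE //.
have [hab|hab] := lerP 0 (a - b);
  rewrite ?(ger0_norm hab) ?(ltr0_norm hab);
have [ha|ha] := lerP 0 a; have [hb|hb] := lerP 0 b;
rewrite ?(ger0_norm ha) ?(ltr0_norm ha) ?(ger0_norm hb) ?(ltr0_norm hb);
(case: ifP => h1; case: ifP => h2);
 try (move/negbT: h1; rewrite -ltNge => h1); try (move/negbT: h2; rewrite -ltNge => h2);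
 rewrite ler_norml; apply/andP; split; lra.
Qed.

Lemma sum_bound (R : realFieldType) (T : eqType) (g : T -> R) (gl : R) (I : seq T) :
  (forall i, i \in I -> `|g i| <= gl) -> `|\sum_(i <- I) g i| <= (size I)%:R * gl.
Proof.
elim: I => [|x I IH] h; first by rewrite big_nil normr0 mul0r.
rewrite big_cons /= -addn1 natrD mulrDl mul1r addrC.
apply: le_trans (ler_normD _ _) _; apply: lerD.
  by apply: IH => i hi; apply: h; rewrite inE hi orbT.
by apply: h; rewrite inE eqxx.
Qed.

Theorem corollary2 (R : realFieldType) (lam eta gl : R) (t : nat)
  (hlam : 0 < lam) (heta0 : 0 < eta) (heta1 : eta < 1) (hgl : 0 < gl)
  (ht : (1 <= t)%N) :
  forall (T : eqType) (g : T -> R) (I : seq T) (s : T),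
    uniq I -> s \notin I ->
    (forall i, i \in s :: I -> `|g i| <= gl) ->
    `|leafVt lam eta gl t g (s :: I) - leafVt lam eta gl t g I|
      <= Num.min (gl / (1 + lam)) (2 * gl * (1 - eta) ^+ t.-1).
Proof.
move=> T g I s _ _ hg.
have hc : 0 < gl * (1 - eta) ^+ t.-1.
  by apply: mulr_gt0 => //; apply: exprn_gt0; lra.
rewrite /leafVt le_min; apply/andP; split; last first.
  apply: le_trans (ler_normB _ _) _.
  have := clip_bound _ (leafV lam g (s :: I)) _ hc.
  have := clip_bound _ (leafV lam g I) _ hc. lra.
apply: le_trans (clip_lip _ _ _ _ hc) _.
have hS := @sum_bound _ _ g gl I (fun i hi => hg i (@mem_behead _ (s :: I) i hi)).
have hs : `|g s| <= gl by apply: hg; rewrite inE eqxx.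
rewrite /leafV big_cons /=.
set S := \sum_(i <- I) g i in hS *.
set n : R := (size I)%:R in hS *.
have n0 : 0 <= n by rewrite /n ler0n.
have nn : 0 <= n * (n - 1).
  rewrite /n; case: (size I) => [|m]; first by rewrite mul0r.
  apply: mulr_ge0; first by rewrite ler0n.
  by rewrite subr_ge0 ler1n.
have -> : (size I).+1%:R = n + 1 by rewrite /n -addn1 natrD.
have e : - (g s + S) / (n + 1 + lam) - - S / (n + lam)
   = (S - g s * (n + lam)) / ((n + lam) * (n + 1 + lam)).
  field; apply/andP; split; apply: lt0r_neq0; lra.
rewrite e normrM (gtr0_norm (_ : 0 < ((n + lam) * (n + 1 + lam))^-1)); last first.
  by rewrite invr_gt0; apply: mulr_gt0; lra.
rewrite ler_pdivrMr; last by apply: mulr_gt0; lra.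
rewrite mulrAC ler_pdivlMr; last lra.
have h1 : `|S - g s * (n + lam)| <= n * gl + gl * (n + lam).
  apply: le_trans (ler_normB _ _) _; apply: lerD => //.
  rewrite normrM (gtr0_norm (_ : 0 < n + lam)); last lra.
  by apply: ler_wpM2r => //; lra.
apply: le_trans (_ : (n * gl + gl * (n + lam)) * (1 + lam) <= _).
  by apply: ler_wpM2r => //; lra.
nra.
Qed.
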